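(* Let $N=2^L$ ($L\ge1$), channel numbers $r_0,\dots,r_{L-1}\ge1$, an output index $y$, and pairwise distinct covering templates $\mathbf x^{(1)},\dots,\mathbf x^{(M)}\in\mathbb R^s$ be given. Suppose all parameters of the deep ConvNet with ReLU activation and max pooling (representation parameters $\theta_1,\dots,\theta_M\in\Theta$ and all linear weights) are drawn from a distribution with a continuous, nowhere-vanishing probability density function. Then with positive probability the resulting score function $h^D_y$ can be realized by a shallow ConvNet with linear activation and product pooling having a single hidden channel ($Z=1$), i.e. there exist $f_{\tilde\theta_1},\dots,f_{\tilde\theta_M}\in\mathcal F$ and weights for this shallow ConvNet with $\mathcal A(h^S_y)=\mathcal A(h^D_y)$.
   Context: Inputs are $X=(\mathbf x_1,\dots,\mathbf x_N)\in(\mathbb R^s)^N$. Representation functions come from a family $\mathcal F=\{f_\theta:\mathbb R^s\to\mathbb R:\theta\in\Theta\}$, $\Theta$ an open subset of a Euclidean space, assumed throughout to satisfy: (continuity) $f_\theta(\mathbf x)$ continuous in $\theta$ and $\mathbf x$; (non-degeneracy) for any pairwise distinct $\mathbf x^{(1)},\dots,\mathbf x^{(M)}$ there exist $f_{\theta_1},\dots,f_{\theta_M}\in\mathcal F$ with $(f_{\theta_d}(\mathbf x^{(i)}))_{i,d}$ non-singular. Linear activation with product pooling: $\sigma(z)=z$, $P=$ product. ReLU activation with max pooling: $\sigma(z)=\max\{0,z\}$, $P=\max$. Shallow ConvNet (activation $\sigma$, pooling $P$, $Z$ hidden channels): $h^S_y(X)=\sum_{z=1}^Z a^y_z\,P_{i\in[N]}\big(\sigma(\sum_{d=1}^M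 a^{z,i}_d f_{\theta_d}(\mathbf x_i))\big)$. Deep ConvNet (activation $\sigma$, pooling $P$): with $f_{\theta_d}\in\mathcal F$, $\mathbf a^{0,j,\gamma}\in\mathbb R^M$ ($j\in[N],\gamma\in[r_0]$), $\mathbf a^{l,j,\gamma}\in\mathbb R^{r_{l-1}}$ ($l\in[L-1]$, $j\in[N/2^l]$, $\gamma\in[r_l]$), $\mathbf a^{L,1,y}\in\mathbb R^{r_{L-1}}$: $u^0_{j,\gamma}=\sigma(\sum_d a^{0,j,\gamma}_d f_{\theta_d}(\mathbf x_j))$; for $l=0,\dots,L-1$, $v^l_{j,\gamma}=P(u^l_{2j-1,\gamma},u^l_{2j,\gamma})$ ($j\in[N/2^{l+1}]$), for $l\ge1$, $u^l_{j,\gamma}=\sigma(\sum_\alpha a^{l,j,\gamma}_\alpha v^{l-1}_{j,\alpha})$ ($j\in[N/2^l]$); $h^D_y(X)=\sum_\alpha a^{L,1,y}_\alpha v^{L-1}_{1,\alpha}$. Grid tensor: $\mathcal A(h)_{d_1,\dots,d_N}=h(\mathbf x^{(d_1)},\dots,\mathbf x^{(d_N)})$. Templates are covering if score functions are identified whenever their grid tensors coincide. *)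

(* Defs.v *)
From HB Require Import structures.
From mathcomp Require Import all_boot all_order all_algebra.
From mathcomp Require Import all_classical all_reals all_analysis.
Set Implicit Arguments.
Unset Strict Implicit.
Unset Printing Implicit Defensive.
Import Order.TTheory GRing.Theory Num.Theory.
Local Open Scope ring_scope.
Local Open Scope classical_set_scope.

Section Defs.
Variable R : realType.

Definition open_set n (O : set ('I_n -> R)) : Prop :=
  forall t, O t -> exists2 d : R, 0 < d &
    forall t', (forall k, `|t' k - t k| < d) -> O t'.

Definition cont_on (I : finType) (O : set (I -> R)) (rho : (I -> R) -> R) :=
  forall p, O p -> forall e : R, 0 < e -> exists2 d : R, 0 < d &
    forall q, O q -> (forall i, `|q i - p i| < d) -> `|rho q - rho p| < e.

Definition family_continuous P s (Theta : set ('I_P -> R))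
    (f : ('I_P -> R) -> ('I_s -> R) -> R) : Prop :=
  forall t x, Theta t -> forall e : R, 0 < e -> exists2 d : R, 0 < d &
    forall t' x', Theta t' -> (forall k, `|t' k - t k| < d) ->
      (forall k, `|x' k - x k| < d) -> `|f t' x' - f t x| < e.

Definition family_nondegenerate P s (Theta : set ('I_P -> R))
    (f : ('I_P -> R) -> ('I_s -> R) -> R) : Prop :=
  forall (n : nat) (xs : 'I_n -> ('I_s -> R)), injective xs ->
    exists th : 'I_n -> ('I_P -> R), (forall k, Theta (th k)) /\
      \det (\matrix_(i < n, k < n) f (th k) (xs i)) != 0.

Definition relu (z : R) : R := Num.max 0 z.

(* Indices are 0-based: u l j g = u^l_{j+1,g+1}; pooling v^l_j = max(u^l_{2j}, u^l_{2j+1}).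
   a0 j g d = a^{0,j,g}_d ; a l j g al = a^{l,j,g}_al (l >= 1) ; aL y al = a^{L,1,y}_al. *)
Fixpoint deep_u M s P (r : nat -> nat) (f : ('I_P -> R) -> ('I_s -> R) -> R)
    (th : 'I_M -> ('I_P -> R)) (a0 : nat -> nat -> nat -> R)
    (a : nat -> nat -> nat -> nat -> R) (X : nat -> ('I_s -> R)) (l : nat)
    : nat -> nat -> R :=
  match l with
  | 0 => fun j g => relu (\sum_(d < M) a0 j g d * f (th d) (X j))
  | l'.+1 => fun j g =>
      relu (\sum_(al < r l')
              a l'.+1 j g al *
              Num.max (deep_u r f th a0 a X l' j.*2 al)
                      (deep_u r f th a0 a X l' j.*2.+1 al))
  end.

Definition deep_h M s P L (r : nat -> nat) (f : ('I_P -> R) -> ('I_s -> R) -> R)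
    (th : 'I_M -> ('I_P -> R)) (a0 : nat -> nat -> nat -> R)
    (a : nat -> nat -> nat -> nat -> R) (aL : nat -> nat -> R) (y : nat)
    (X : nat -> ('I_s -> R)) : R :=
  \sum_(al < r L.-1) aL y al *
     Num.max (deep_u r f th a0 a X L.-1 0 al) (deep_u r f th a0 a X L.-1 1 al).

Definition shallow1_h M s P N (f : ('I_P -> R) -> ('I_s -> R) -> R)
    (th : 'I_M -> ('I_P -> R)) (c : R) (b : 'I_N -> 'I_M -> R)
    (X : nat -> ('I_s -> R)) : R :=
  c * \prod_(i < N) (\sum_(d < M) b i d * f (th d) (X i)).

(* grid tensor entry A(h)_{d_1..d_N} = h(x^(d_1),...,x^(d_N)) ; inputs X as nat-indexed *)
Definition grid_input M s N (xs : 'I_M -> ('I_s -> R)) (ds : 'I_N -> 'I_M)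
    : nat -> ('I_s -> R) :=
  fun j => match insub j : option 'I_N with
           | Some j' => xs (ds j') | None => fun _ => 0 end.

(* coordinates: theta_d's coordinates; layer-0 weights (j,g,d);
   layer l+1 weights (1 <= l+1 <= L-1) (j,g,al); output weights (y,al). *)
Definition PIdx (M P N L Y : nat) (r : nat -> nat) : finType :=
  (('I_M * 'I_P) + ('I_N * 'I_(r 0) * 'I_M)
   + {l : 'I_L.-1 & ('I_(N %/ 2 ^ l.+1) * 'I_(r l.+1) * 'I_(r l))%type}
   + ('I_Y * 'I_(r L.-1)))%type.

Section Decode.
Variables (M P N L Y : nat) (r : nat -> nat).
Variable p : PIdx M P N L Y r -> R.

Definition dec_theta : 'I_M -> ('I_P -> R) :=
  fun d k => p (inl (inl (inl (d, k)))).
Definition dec_a0 : nat -> nat -> nat -> R := fun j g d =>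
  match insub j : option 'I_N, insub g : option 'I_(r 0), insub d : option 'I_M with
  | Some j', Some g', Some d' => p (inl (inl (inr (j', g', d'))))
  | _, _, _ => 0 end.
Definition dec_a : nat -> nat -> nat -> nat -> R := fun l j g al =>
  match l with
  | 0 => 0
  | l'.+1 =>
    match insub l' : option 'I_L.-1 with
    | Some lo =>
      match insub j : option 'I_(N %/ 2 ^ lo.+1), insub g : option 'I_(r lo.+1),
            insub al : option 'I_(r lo) with
      | Some j', Some g', Some al' =>
          p (inl (inr (existT (fun l0 : 'I_L.-1 =>
               ('I_(N %/ 2 ^ l0.+1) * 'I_(r l0.+1) * 'I_(r l0))%type) lo (j', g', al'))))
      | _, _, _ => 0 end
    | None => 0 end
  end.
Definition dec_aL : nat -> nat -> R := fun y al =>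
  match insub y : option 'I_Y, insub al : option 'I_(r L.-1) with
  | Some y', Some al' => p (inr (y', al'))
  | _, _ => 0 end.
End Decode.

Definition upd (I : finType) (q : I -> R) (i : I) (x : R) : I -> R :=
  fun j => if j == i then x else q j.

(* iterated Lebesgue integral over all coordinates of I (Tonelli: = integral
   against the product Lebesgue measure for nonnegative measurable g) *)
Fixpoint iint_seq (I : finType) (sq : seq I) (g : (I -> R) -> \bar R) (q : I -> R)
    : \bar R :=
  match sq with
  | [::] => g q
  | i :: sq' => (\int[@lebesgue_measure R]_x iint_seq sq' g (upd q i x))%E
  end.
Definition iint (I : finType) (g : (I -> R) -> \bar R) : \bar R :=
  iint_seq (enum I) g (fun _ => 0).

Definition pmeasurable (I : finType) (A : set (I -> R)) : Prop :=
  g_sigma_preimage (fun (k : 'I_#|I|) (q : I -> R) => q (enum_val k)) A.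

Definition dprob (I : finType) (Omega : set (I -> R)) (rho : (I -> R) -> R)
    (A : set (I -> R)) : \bar R :=
  iint (fun q => (\1_(A `&` Omega) q * rho q)%:E).

Definition cont_pos_density (I : finType) (Omega : set (I -> R))
    (rho : (I -> R) -> R) : Prop :=
  [/\ forall q, Omega q -> 0 < rho q,
      cont_on Omega rho &
      iint (fun q => (\1_Omega q * rho q)%:E) = 1%E].

End Defs.

(* Main.v *)
Require Import Defs.
From HB Require Import structures.
From mathcomp Require Import all_boot all_order all_algebra.
From mathcomp Require Import all_classical all_reals all_analysis.
From mathcomp Require Import ring lra.
Import Order.TTheory GRing.Theory Num.Theory.
Local Open Scope ring_scope.
Local Open Scope classical_set_scope.

Section Meas.
Set Implicit Arguments. Unset Strict Implicit.

Variable R : realType.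
Variable I : finType.

Lemma in_bigsetI (r : seq I) (F : I -> set (I -> R)) q :
  (\big[setI/setT]_(i <- r) F i) q <-> (forall i, i \in r -> F i q).
Proof.
elim: r => [|a r IH]; first by rewrite big_nil; split.
rewrite big_cons; split.
  move=> [Fa /IH H] i; rewrite inE => /orP[/eqP->//|]; exact: H.
move=> H; split; first by apply: H; rewrite inE eqxx.
by apply/IH => i ir; apply: H; rewrite inE ir orbT.
Qed.

Lemma in_bigU T n (F : 'I_n -> set (set T)) j A : F j A -> (\big[setU/set0]_(k < n) F k) A.
Proof. by move=> H; rewrite (bigD1 j) //=; left. Qed.

Lemma box_meas (c : I -> R) (dl : R) :
  pmeasurable [set q : I -> R | forall i, `|q i - c i| < dl].
Proof.
set G := \big[setU/set0]_(k < #|I|) preimage_set_system setT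
   (fun (q : I -> R) => q (enum_val k)) measurable.
have -> : [set q : I -> R | forall i, `|q i - c i| < dl] =
  \big[setI/setT]_(i <- enum I) [set q : I -> R | `|q i - c i| < dl].
  apply/seteqP; split => q /=.
    by move=> H; apply/in_bigsetI => i _; apply: H.
  by move/in_bigsetI => H i; apply: H; rewrite mem_enum.
rewrite /pmeasurable /g_sigma_preimage -/G.
have [GT _ _ GI] := (sigma_algebraP (fun X _ => @subsetT _ X)).1
   (smallest_sigma_algebra setT G).
elim: (enum I) => [|a r IH]; first by rewrite big_nil.
rewrite big_cons; apply: GI => //.
apply: sub_sigma_algebra; rewrite /G.
apply: (@in_bigU _ _ _ (enum_rank a)).
exists `]c a - dl, c a + dl[%classic; first exact: measurable_itv.
apply/seteqP; split => q /=; rewrite enum_rankK.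
  by move=> [_]; rewrite /preimage/= in_itv /= ltr_distl.
by move=> H; split => //; rewrite /preimage/= in_itv /= -ltr_distl.
Qed.
End Meas.
Section Int.
Set Implicit Arguments. Unset Strict Implicit.

Variable R : realType.
Variable I : finType.
Local Open Scope ereal_scope.

Lemma int_mono (g1 g2 : R -> \bar R) : (forall x, 0 <= g1 x) -> (forall x, g1 x <= g2 x) ->
  \int[@lebesgue_measure R]_x g1 x <= \int[@lebesgue_measure R]_x g2 x.
Proof.
move=> g10 g12.
rewrite !ge0_integralE //; last by move=> x _; exact: le_trans (g10 x) (g12 x).
rewrite !patch_setT.
apply: ereal_sup_le => _ [h hh <-]; exists h => //= x; exact: le_trans (hh x) (g12 x).
Qed.

Lemma iint_seq_ge0 (sq : seq I) (g : (I -> R) -> \bar R) q :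
  (forall q, 0 <= g q) -> 0 <= iint_seq sq g q.
Proof.
move=> g0; elim: sq q => [|i sq IH] q /=; first exact: g0.
by apply: integral_ge0 => x _; exact: IH.
Qed.

Lemma iint_seq_mono (sq : seq I) (g1 g2 : (I -> R) -> \bar R) q :
  (forall q, 0 <= g1 q) -> (forall q, g1 q <= g2 q) ->
  iint_seq sq g1 q <= iint_seq sq g2 q.
Proof.
move=> g0 g12; elim: sq q => [|i sq IH] q /=; first exact: g12.
apply: int_mono => x; [exact: iint_seq_ge0 | exact: IH].
Qed.

Lemma iint_box (c : I -> R) (dl k : R) : (0 < dl)%R -> (0 < k)%R ->
  forall sq, uniq sq -> forall q, (forall j, j \notin sq -> (`|q j - c j| < dl)%R) ->
  (k * (dl *+ 2) ^+ size sq)%:E <=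
  iint_seq sq (fun q => (k * \1_[set q | forall i, (`|q i - c i| < dl)%R] q)%:E) q.
Proof.
move=> dl0 k0; elim=> [|i sq IH] /=.
  move=> _ q H; rewrite expr0 mulr1 indicE mem_set ?mulr1 //.
  by move=> i; apply: H.
move=> /andP[isq usq] q H.
set K := (k * (dl *+ 2) ^+ size sq)%R.
have K0 : (0 <= K)%R by apply: mulr_ge0; [exact: ltW | apply: exprn_ge0; apply: mulrn_wge0; exact: ltW].
pose J : set R := `](c i - dl)%R, (c i + dl)%R[%classic.
have -> : (k * (dl *+ 2) ^+ (size sq).+1)%:E = \int[@lebesgue_measure R]_x (K * \1_J x)%:E.
  have E := @integralZl_indic _ _ _ (@lebesgue_measure R) _ measurableT (fun _ => J) K. rewrite /= in E. rewrite E //; last exact: measurable_itv.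
    rewrite integral_indic //; last exact: measurable_itv.
    rewrite setIT.
    set mJ := (X in K%:E * X).
    have -> : mJ = (dl *+ 2)%:E.
      rewrite /mJ; apply: etrans; first exact: lebesgue_measure_itv.
      rewrite /= ifT; last by rewrite lte_fin ltrD2l gtrN.
      rewrite -EFinB; congr (_%:E).
      rewrite mulr2n; ring.
    rewrite -EFinM /K exprS; congr (_%:E); ring.
  by move=> /lt_le_trans /(_ K0); rewrite ltxx.
apply: int_mono => x.
  by rewrite lee_fin mulr_ge0 //.
rewrite indicE; case: (boolP (x \in J)) => xJ.
  rewrite mulr1; apply: IH => // j jsq; rewrite /upd.
  case: eqP => [->|/eqP ji].
    by move: xJ; rewrite /J inE /= in_itv /= ltr_distl.
  by apply: H; rewrite inE negb_or ji.
by rewrite mulr0; apply: iint_seq_ge0 => q' /=; rewrite lee_fin mulr_ge0 // ltW.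
Qed.
End Int.

Section Ev.
Set Implicit Arguments. Unset Strict Implicit.

Variable R : realType.
Variable I : finType.
Variable c : I -> R.

Definition Ev (P : (I -> R) -> Prop) :=
  exists2 d : R, 0 < d & forall q, (forall i, `|q i - c i| < d) -> P q.

Lemma EvS (P Q : (I -> R) -> Prop) : Ev P -> (forall q, P q -> Q q) -> Ev Q.
Proof. by move=> [d d0 H] PQ; exists d => // q /H; apply: PQ. Qed.

Lemma EvI (P Q : (I -> R) -> Prop) : Ev P -> Ev Q -> Ev (fun q => P q /\ Q q).
Proof.
move=> [d1 d10 H1] [d2 d20 H2]; exists (Num.min d1 d2); first by rewrite lt_min d10 d20.
move=> q Hq; split; [apply: H1|apply: H2] => i; apply: lt_le_trans (Hq i) _;
  by rewrite ge_min lexx ?orbT.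
Qed.

Lemma Ev_all (J : finType) (P : J -> (I -> R) -> Prop) :
  (forall j, Ev (P j)) -> Ev (fun q => forall j, P j q).
Proof.
move=> H.
suff: forall s : seq J, Ev (fun q => forall j, j \in s -> P j q).
  by move/(_ (enum J))/EvS; apply => q Hq j; apply: Hq; rewrite mem_enum.
elim => [|a s IH]; first by exists 1.
apply: (EvS (EvI (H a) IH)) => q [Ha Hs] j; rewrite inE => /orP[/eqP->//|]; exact: Hs.
Qed.

Definition ContAt (Om : (I -> R) -> Prop) (F : (I -> R) -> R) :=
  forall e : R, 0 < e -> Ev (fun q => Om q -> `|F q - F c| < e).

Lemma cont_coord Om i : ContAt Om (fun q => q i).
Proof. by move=> e e0; exists e => // q H _; apply: H. Qed.

Lemma cont_add Om F G : ContAt Om F -> ContAt Om G -> ContAt Om (fun q => F q + G q).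
Proof.
move=> HF HG e e0.
have e20 : 0 < e / 2 by rewrite divr_gt0.
apply: (EvS (EvI (HF _ e20) (HG _ e20))) => q [H1 H2] Omq.
have {H1}H1 := H1 Omq; have {H2}H2 := H2 Omq.
have -> : F q + G q - (F c + G c) = (F q - F c) + (G q - G c) by ring.
apply: le_lt_trans (ler_normD _ _) _.
have -> : e = e / 2 + e / 2 by field.
exact: ltrD.
Qed.

Lemma cont_mul Om F G : ContAt Om F -> ContAt Om G -> ContAt Om (fun q => F q * G q).
Proof.
move=> HF HG e e0.
pose a := `|F c|; pose b := `|G c|.
have ab0 : 0 < a + b + 1 by rewrite ltr_wpDl ?addr_ge0 ?normr_ge0.
pose eta := Num.min 1 (e / (a + b + 1)).
have eta0 : 0 < eta by rewrite lt_min ltr01 divr_gt0.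
have eta1 : eta <= 1 by rewrite ge_min lexx.
have eta2 : eta * (a + b + 1) <= e.
  by rewrite -ler_pdivlMr // ge_min lexx orbT.
apply: (EvS (EvI (HF _ eta0) (HG _ eta0))) => q [H1 H2] Omq.
have {H1}H1 := H1 Omq; have {H2}H2 := H2 Omq.
have -> : F q * G q - F c * G c =
  (F q - F c) * (G q - G c) + F c * (G q - G c) + G c * (F q - F c) by ring.
apply: le_lt_trans (ler_normD _ _) _.
apply: le_lt_trans (lerD (ler_normD _ _) (lexx _)) _.
rewrite !normrM -/a -/b.
have := normr_ge0 (F q - F c); have := normr_ge0 (G q - G c).
have := normr_ge0 (F c); have := normr_ge0 (G c).
rewrite -/a -/b.
move: H1 H2 eta1 eta2 eta0.
set x := `|F q - F c|; set y := `|G q - G c|.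
move=> H1 H2 eta1 eta2 eta0 hb ha hy hx.
nra.
Qed.

Lemma cont_sum Om (J : Type) (s : seq J) (Fs : J -> (I -> R) -> R) :
  (forall j, ContAt Om (Fs j)) -> ContAt Om (fun q => \sum_(j <- s) Fs j q).
Proof.
move=> H; elim: s => [|a s IH].
  by move=> e e0; exists 1 => // q _ _; rewrite !big_nil subrr normr0.
move=> e e0; apply: (EvS (cont_add (H a) IH e0)) => q; by rewrite !big_cons.
Qed.

Definition boxs (dl : R) : set (I -> R) := [set q | forall i, `|q i - c i| < dl].

Lemma dprob_box_pos (Om : set (I -> R)) (rho : (I -> R) -> R) (dl k : R) :
  0 < dl -> 0 < k ->
  (forall q, boxs dl q -> Om q /\ k <= rho q) ->
  (0 < dprob Om rho (boxs dl))%E.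
Proof.
move=> dl0 k0 H.
have Hq : forall j, j \notin enum I -> `|(fun _ : I => 0 : R) j - c j| < dl.
  by move=> j; rewrite mem_enum.
have HB := @iint_box R I c dl k dl0 k0 (enum I) (enum_uniq _) (fun _ => 0) Hq.
apply: (lt_le_trans _ (le_trans HB _)).
  by rewrite lte_fin mulr_gt0 // exprn_gt0 // mulrn_wgt0.
apply: iint_seq_mono => q.
  by rewrite lee_fin mulr_ge0 // ?ltW // indicE; case: (_ \in _).
rewrite !indicE; case: (boolP (q \in [set q0 | forall i, `|q0 i - c i| < dl])) => qb.
  have qb' : boxs dl q by move: qb; rewrite inE.
  have [Omq kq] := H q qb'.
  by rewrite mem_set //= !mulr1 mul1r lee_fin.
rewrite mulr0 lee_fin; case: (boolP (q \in boxs dl `&` Om)) => qbo; last by rewrite mul0r.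
by move/set_mem: qbo => [qb1 _]; rewrite mem_set in qb.
Qed.

End Ev.

Section Deep.
Set Implicit Arguments. Unset Strict Implicit.
Variable R : realType.

Lemma insub_ord n (d : 'I_n) : insub (nat_of_ord d) = Some d.
Proof. exact: valK. Qed.

Lemma relu0 : relu (0 : R) = 0.
Proof. by rewrite /relu maxxx. Qed.

Lemma deep_u_zero M s P (r : nat -> nat) f th a0 a X :
  (forall j g, @deep_u R M s P r f th a0 a X 0 j g = 0) ->
  forall l j g, deep_u r f th a0 a X l j g = 0.
Proof.
move=> H0 l; elim: l => [|l IH] j g; first exact: H0.
rewrite /= big1 ?relu0 // => al _; by rewrite !IH maxxx mulr0.
Qed.

Lemma deep_h_zero M s P L (r : nat -> nat) f th a0 a aL y X :
  (forall j g, @deep_u R M s P r f th a0 a X 0 j g = 0) ->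
  @deep_h R M s P L r f th a0 a aL y X = 0.
Proof.
move=> H0; rewrite /deep_h big1 // => al _.
by rewrite !(deep_u_zero H0) maxxx mulr0.
Qed.
End Deep.

Theorem claim12 (R : realType) (s P : nat) (Theta : set ('I_P -> R))
    (f : ('I_P -> R) -> ('I_s -> R) -> R)
    (L : nat) (r : nat -> nat) (Y : nat) (y : 'I_Y) (M : nat)
    (xs : 'I_M -> ('I_s -> R))
    (rho : (PIdx M P (2 ^ L) L Y r -> R) -> R) :
  open_set Theta ->
  family_continuous Theta f ->
  family_nondegenerate Theta f ->
  (1 <= L)%N ->
  (forall l, (l < L)%N -> (0 < r l)%N) ->
  injective xs ->
  cont_pos_density [set p | forall d, Theta (dec_theta p d)] rho ->
  exists A : set (PIdx M P (2 ^ L) L Y r -> R),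
    [/\ pmeasurable A,
        A `<=` [set p | exists (th : 'I_M -> ('I_P -> R)) (c : R)
                               (b : 'I_(2 ^ L) -> 'I_M -> R),
                  (forall d, Theta (th d)) /\
                  forall ds : 'I_(2 ^ L) -> 'I_M,
                    shallow1_h f th c b (grid_input xs ds) =
                    deep_h L r f (dec_theta p) (dec_a0 p) (dec_a p) (dec_aL p)
                      y (grid_input xs ds)] &
        (0 < dprob [set p | forall d, Theta (dec_theta p d)] rho A)%E].
Proof.
move=> Thop Fcont Fnd L1 r0 xsinj [rho_pos rho_cont _].
have [th [thT thdet]] := Fnd M xs xsinj.
pose F := \matrix_(i < M, k < M) f (th k) (xs i).
have Fu : F \in unitmx by rewrite unitmxE unitfE.
have [w Fw] : exists w : 'cV[R]_M,
    forall i, \sum_(d < M) w d ord0 * f (th d) (xs i) = -1.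
  exists (invmx F *m const_mx (-1)) => i.
  have E := mulKVmx Fu (const_mx (-1) : 'cV[R]_M).
  transitivity ((F *m (invmx F *m (const_mx (-1) : 'cV[R]_M))) i ord0); last by rewrite E mxE.
  rewrite [RHS]mxE; apply: eq_bigr => d _; by rewrite [F i d]mxE mulrC.
pose c : PIdx M P (2 ^ L) L Y r -> R := fun idx =>
  match idx with
  | inl (inl (inl (d, k))) => th d k
  | inl (inl (inr (_, d))) => w d ord0
  | _ => 0
  end.
pose Om : set (PIdx M P (2 ^ L) L Y r -> R) :=
  [set p | forall d, Theta (dec_theta p d)].
have Omc : Om c by move=> d; exact: (thT d).
have EvOm : Ev c Om.
  apply: Ev_all => d.
  have [dl dl0 Hd] := Thop _ (thT d).
  exists dl => // q Hq; apply: Hd => k; exact: (Hq (inl (inl (inl (d, k))))).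
have rc := rho_pos c Omc.
have Evrho : Ev c (fun q => Om q -> rho c / 2 <= rho q).
  have rc2 : 0 < rho c / 2 by rewrite divr_gt0.
  have [dl dl0 Hd] := rho_cont c Omc (rho c / 2) rc2.
  exists dl => // q Hq Omq; have := Hd q Omq Hq.
  rewrite ltr_distl => /andP[H _]; lra.
pose S (j : 'I_(2 ^ L)) (g : 'I_(r 0)) (i : 'I_M) (q : PIdx M P (2 ^ L) L Y r -> R) :=
  \sum_(d < M) q (inl (inl (inr (j, g, d)))) * f (dec_theta q d) (xs i).
have cont_f : forall d i, ContAt c Om (fun q => f (dec_theta q d) (xs i)).
  move=> d i e e0.
  have [dl dl0 Hd] := Fcont (th d) (xs i) (thT d) e e0.
  exists dl => // q Hq Omq; apply: Hd.
  - exact: Omq.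
  - move=> k; exact: (Hq (inl (inl (inl (d, k))))).
  - by move=> k; rewrite subrr normr0.
have ContS : forall j g i, ContAt c Om (S j g i).
  move=> j g i; apply: cont_sum => d; apply: cont_mul; [exact: cont_coord | exact: cont_f].
have Sc : forall j g i, S j g i c = -1 by move=> j g i; exact: Fw.
have H3 : Ev c (fun q => forall j g i, Om q -> S j g i q < 0).
  apply: Ev_all => j; apply: Ev_all => g; apply: Ev_all => i.
  apply: (EvS (ContS j g i 1 ltr01)) => q H Omq; have := H Omq; rewrite Sc.
  rewrite ltr_distl => /andP[_ H']; lra.
have [dl dl0 Hall] := EvI EvOm (EvI Evrho H3).
exists (boxs c dl); split.
- exact: box_meas.
- move=> q /Hall [Omq [rq HS]].
  exists th, 0, (fun _ _ => 0); split => // ds.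
  rewrite /shallow1_h mul0r; symmetry; apply: deep_h_zero => j g /=.
  rewrite /dec_a0 /grid_input.
  case: (@insubP _ _ 'I_(2 ^ L) j) => [j' _ Ej|_]; last first.
    by rewrite big1 ?relu0 // => d _; rewrite mul0r.
  case: (@insubP _ _ 'I_(r 0) g) => [g' _ Eg|_]; last first.
    by rewrite big1 ?relu0 // => d _; rewrite mul0r.
  rewrite (eq_bigr (fun d : 'I_M => q (inl (inl (inr (j', g', d)))) * f (dec_theta q d) (xs (ds j')))); last first.
    by move=> d _; rewrite insub_ord.
  rewrite /relu; apply/max_idPl; apply: ltW; exact: (HS j' g' (ds j') Omq).
- apply: (dprob_box_pos (k := rho c / 2)) => //; first by rewrite divr_gt0.
  by move=> q /Hall [Omq [rq _]]; split => //; apply: rq.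
Qed.
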